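(* A finite nonempty semigroup $S$ has a left zero or a right zero if and only if $S$ is $K$-thin and its group completion $GS$ is trivial.
   Context: An element $z\in S$ is a left zero if $zx=z$ for all $x\in S$, and a right zero if $xz=z$ for all $x\in S$. The group completion $GS$ is the image of $S$ under the left adjoint of the forgetful functor from groups to semigroups. For a finite nonempty semigroup $S$, the minimal ideal $K(S)$ is the intersection of all nonempty two-sided ideals of $S$. A Rees matrix semigroup $\mathcal{M}(H;I,J;p)$, for sets $I,J$, a group $H$ and a function $p\colon J\times I\to H$, is the set $I\times H\times J$ with product $(i,h,j)(i',h',j')=(i,h\,p(j,i')\,h',j')$. It is known that $K(S)$ is always isomorphic to such a Rees matrix semigroup with $H$ a finite group and $p$ normalized (i.e. $p(j_0,i)=e_H$ and $p(j,i_0)=e_H$ for some fixed $i_0\in I$, $j_0\in J$ and all $i,j$). $S$ is called $K$-thin if $K(S)$ has such a normalized Rees matrix structure with $|I|=1$ or $|J|=1$; equivalently, $K(S)$ is left-simple or right-simple. *)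

(* Defs.v *)
From mathcomp Require Import all_boot all_fingroup.
Set Implicit Arguments. Unset Strict Implicit. Unset Printing Implicit Defensive.

(* A finite semigroup is given by a finType S with an associative binary
   operation op (associativity is a hypothesis of the main theorem). *)

Section SemigroupDefs.
Variables (S : finType) (op : S -> S -> S).

Definition is_left_zero (z : S) : Prop := forall x : S, op z x = z.
Definition is_right_zero (z : S) : Prop := forall x : S, op x z = z.

Definition ideal (A : {set S}) : bool :=
  (A != set0) && [forall a in A, forall x : S, (op x a \in A) && (op a x \in A)].

Definition minimal_ideal : {set S} := \bigcap_(A | ideal A) A.

Definition rees_mul (I J : finType) (H : finGroupType) (p : J -> I -> H)
  (x y : I * H * J) : I * H * J :=
  let: (i, h, j) := x in let: (i', h', j') := y in
  (i, (h * p j i' * h')%g, j').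

(* K(S) is isomorphic to a Rees matrix semigroup M(H; I, J; p), H a finite
   group and p normalized, via an injective homomorphism f with image K(S). *)
Definition K_rees_structure (I J : finType) (H : finGroupType)
  (p : J -> I -> H) (f : I * H * J -> S) : Prop :=
  (exists (i0 : I) (j0 : J),
     (forall i, p j0 i = 1%g) /\ (forall j, p j i0 = 1%g)) /\
  injective f /\
  (forall s : S, s \in minimal_ideal <-> exists x, f x = s) /\
  (forall x y, f (rees_mul p x y) = op (f x) (f y)).

Definition K_thin : Prop :=
  exists (I J : finType) (H : finGroupType) (p : J -> I -> H) (f : I * H * J -> S),
    K_rees_structure p f /\ (#|I| = 1 \/ #|J| = 1).

End SemigroupDefs.

(* Arbitrary (possibly infinite) groups, used to express the universal
   property of the group completion. *)
Record group := Group {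
  gcar :> Type;
  gmul : gcar -> gcar -> gcar;
  gone : gcar;
  ginv : gcar -> gcar;
  gmulA : forall x y z, gmul x (gmul y z) = gmul (gmul x y) z;
  gmul1 : forall x, gmul gone x = x;
  gmulV : forall x, gmul (ginv x) x = gone
}.

(* The group completion GS (image of S under the left adjoint of the forgetful
   functor Grp -> SGrp) is trivial iff, by the adjunction, every semigroup
   homomorphism from S to any group is trivial. *)
Definition group_completion_trivial (S : Type) (op : S -> S -> S) : Prop :=
  forall (G : group) (f : S -> G),
    (forall x y, f (op x y) = gmul (f x) (f y)) -> forall x, f x = gone G.

(* Main.v *)
Require Import Defs.
From mathcomp Require Import all_boot all_fingroup.
From mathcomp Require Import zmodp.

Lemma gmulVr (G : Defs.group) (x : G) : gmul x (ginv x) = gone G.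
Proof.
have e1 : gmul x (ginv x) =
  gmul (gmul (ginv (ginv x)) (ginv x)) (gmul x (ginv x)) by rewrite gmulV gmul1.
rewrite e1 -gmulA (gmulA (ginv x) x) (gmulV x) gmul1 (gmulV (ginv x)) //.
Qed.

Lemma gmul1r (G : Defs.group) (x : G) : gmul x (gone G) = x.
Proof. by rewrite -(gmulV x) gmulA gmulVr gmul1. Qed.

Lemma K_closed (S : finType) (op : S -> S -> S) s y :
  y \in minimal_ideal op -> (op s y \in minimal_ideal op) /\ (op y s \in minimal_ideal op).
Proof.
move/bigcapP => HA; split; apply/bigcapP => A hA; have yA := HA A hA;
  move: hA => /andP[_ /forallP hA]; have := hA y; rewrite yA /= => /forallP /(_ s) /andP[] //.
Qed.

Arguments K_closed {S op} s {y}.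

Section Back.
Variables (S : finType) (op : S -> S -> S) (opA : associative op).
Variables (I J : finType) (H : finGroupType) (p : J -> I -> H) (f : I * H * J -> S).
Hypothesis KR : K_rees_structure op p f.
Hypothesis GT : group_completion_trivial op.

Definition Hc (y : S) : H := if [pick x | f x == y] is Some x then x.1.2 else 1%g.

Let finj : injective f. Proof. by case: KR => _ []. Qed.
Let fK : forall s : S, s \in minimal_ideal op <-> exists x, f x = s.
Proof. by case: KR => _ [] _ []. Qed.
Let fM : forall x y, f (rees_mul p x y) = op (f x) (f y).
Proof. by case: KR => _ [] _ []. Qed.

Lemma HcE x : Hc (f x) = x.1.2.
Proof.
rewrite /Hc; case: pickP => [x' /eqP /finj -> // | /(_ x)]; by rewrite eqxx.
Qed.

Lemma inK x : f x \in minimal_ideal op.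
Proof. by apply/fK; exists x. Qed.

Let GH : Defs.group := Defs.Group (@mulgA H) (@mul1g H) (@mulVg H).

Lemma back_J : #|J| = 1 -> exists z, is_left_zero op z.
Proof.
move=> cJ.
case: KR => [[i0 [j0 [pj0 pi0]]] _].
have Jeq : forall j : J, j = j0.
  move=> j; have /card_le1_eqP : #|J| <= 1 by rewrite cJ.
  move=> Hq; apply: Hq; by [].
set e := f (i0, 1%g, j0).
have mulH : forall x y, Hc (op (f x) (f y)) = (x.1.2 * y.1.2)%g.
  move=> [[a b] c] [[a' b'] c']; by rewrite -fM /= HcE /= (Jeq c) pj0 mulg1.
pose psi s := Hc (op e s).
have key : forall s y, y \in minimal_ideal op -> Hc (op s y) = (psi s * Hc y)%g.
  move=> s y /fK [x <-].
  have [u eu] : exists u, f u = op e s by apply/fK; case: (K_closed s (inK (i0, 1%g, j0))).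
  have [w ew] : exists w, f w = op s (f x) by apply/fK; case: (K_closed s (inK x)).
  move: (opA e s (f x)); rewrite -ew -eu => /(congr1 Hc); rewrite (mulH (i0, 1%g, j0)) mulH /psi -eu !HcE /= mul1g => ->.
  by [].
have hom : forall s t, psi (op s t) = (psi s * psi t)%g.
  move=> s t; apply: (@mulIg _ (Hc e)).
  rewrite -key; last exact: inK.
  rewrite -opA key; last by case: (K_closed t (inK (i0, 1%g, j0))).
  rewrite key ?mulgA //; exact: inK.
have triv := @GT GH psi hom.
have Htriv : forall h : H, h = 1%g.
  move=> h; have := triv (f (i0, h, j0)); by rewrite /psi mulH /= mul1g.
have ee : op e e = e by rewrite -fM /= pj0 !mulg1.
exists e => x.
have [w ew] : exists w, f w = op e x by apply/fK; case: (K_closed x (inK (i0, 1%g, j0))).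
rewrite -{1}ee -opA -ew -fM.
case: w {ew} => [[a b] c] /=; by rewrite pj0 (Htriv b) (Jeq c) !mulg1.
Qed.

Lemma back_I : #|I| = 1 -> exists z, is_right_zero op z.
Proof.
move=> cI.
case: KR => [[i0 [j0 [pj0 pi0]]] _].
have Ieq : forall i : I, i = i0.
  move=> i; have /card_le1_eqP : #|I| <= 1 by rewrite cI.
  move=> Hq; apply: Hq; by [].
set e := f (i0, 1%g, j0).
have mulH : forall x y, Hc (op (f x) (f y)) = (x.1.2 * y.1.2)%g.
  move=> [[a b] c] [[a' b'] c']; by rewrite -fM /= HcE /= (Ieq a') pi0 mulg1.
pose psi s := Hc (op s e).
have key : forall s y, y \in minimal_ideal op -> Hc (op y s) = (Hc y * psi s)%g.
  move=> s y /fK [x <-].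
  have [u eu] : exists u, f u = op s e by apply/fK; case: (K_closed s (inK (i0, 1%g, j0))).
  have [w ew] : exists w, f w = op (f x) s by apply/fK; case: (K_closed s (inK x)).
  move: (opA (f x) s e); rewrite -ew -eu => /(congr1 Hc); rewrite mulH (mulH _ (i0, 1%g, j0)) /psi -eu !HcE /= mulg1 => <-.
  by [].
have hom : forall s t, psi (op s t) = (psi s * psi t)%g.
  move=> s t; apply: (@mulgI _ (Hc e)).
  rewrite -key; last exact: inK.
  rewrite opA key; last by case: (K_closed s (inK (i0, 1%g, j0))).
  rewrite key ?mulgA //; exact: inK.
have triv := @GT GH psi hom.
have Htriv : forall h : H, h = 1%g.
  move=> h; have := triv (f (i0, h, j0)); by rewrite /psi mulH /= mulg1.
have ee : op e e = e by rewrite -fM /= pj0 !mulg1.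
exists e => x.
have [w ew] : exists w, f w = op x e by apply/fK; case: (K_closed x (inK (i0, 1%g, j0))).
rewrite -{1}ee opA -ew -fM.
case: w {ew} => [[a b] c] /=; by rewrite pi0 (Htriv b) (Ieq a) !mulg1.
Qed.

End Back.

Theorem proposition7p2 (S : finType) (op : S -> S -> S)
  (opA : associative op) (s0 : S) :
  ((exists z : S, is_left_zero op z) \/ (exists z : S, is_right_zero op z)) <->
  (K_thin op /\ group_completion_trivial op).
Proof.
split.
- case=> [[z hz]|[z hz]].
  + split.
    * pose L := [set x | [forall y, op x y == x]].
      have hL : forall s, s \in minimal_ideal op <-> s \in L.
        move=> s; split.
        - move/bigcapP; apply; apply/andP; split.
            apply/set0Pn; exists z; rewrite inE; apply/forallP => y; apply/eqP; exact: hz.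
          apply/forallP => a; apply/implyP; rewrite inE => /forallP ha.
          apply/forallP => x; rewrite !inE; apply/andP; split.
            apply/forallP => y; by rewrite -opA (eqP (ha y)).
          by rewrite (eqP (ha x)); apply/forallP.
        - rewrite inE => /forallP hs; apply/bigcapP => A /andP[/set0Pn [a aA] /forallP hA].
          have := hA a; rewrite aA /= => /forallP /(_ s) /andP[].
          by rewrite (eqP (hs a)).
      exists {x : S | x \in L}, unit, ('I_1 : finGroupType), (fun _ _ => 1%g),
        (fun x => val x.1.1).
      split; last by right; rewrite card_unit.
      split.
        have zL : z \in L by rewrite inE; apply/forallP => y; apply/eqP.
        by exists (exist _ z zL), tt.
      split.
        move=> [[a b] c] [[a' b'] c'] /= /val_inj ->.
        by rewrite (ord1 b) (ord1 b'); case: c; case: c'.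
      split.
        move=> s; split.
          by move=> /hL sL; exists (exist _ s sL, 1%g, tt).
        by move=> [[[[a aL] b] c] /= <-]; apply/hL.
      move=> [[a b] c] [[a' b'] c'] /=.
      by have := valP a; rewrite inE => /forallP /(_ (val a')) /eqP ->.
    * move=> G f fM x; have := fM z x; rewrite hz => e.
      have : gmul (ginv (f z)) (f z) = gmul (ginv (f z)) (gmul (f z) (f x)) by rewrite -e.
      by rewrite gmulA gmulV gmul1 => ->.
  + split.
    * pose L := [set x | [forall y, op y x == x]].
      have hL : forall s, s \in minimal_ideal op <-> s \in L.
        move=> s; split.
        - move/bigcapP; apply; apply/andP; split.
            apply/set0Pn; exists z; rewrite inE; apply/forallP => y; apply/eqP; exact: hz.
          apply/forallP => a; apply/implyP; rewrite inE => /forallP ha.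
          apply/forallP => x; rewrite !inE; apply/andP; split.
            by rewrite (eqP (ha x)); apply/forallP.
          apply/forallP => y; by rewrite opA (eqP (ha y)).
        - rewrite inE => /forallP hs; apply/bigcapP => A /andP[/set0Pn [a aA] /forallP hA].
          have := hA a; rewrite aA /= => /forallP /(_ s) /andP[_].
          by rewrite (eqP (hs a)).
      exists unit, {x : S | x \in L}, ('I_1 : finGroupType), (fun _ _ => 1%g),
        (fun x => val x.2).
      split; last by left; rewrite card_unit.
      split.
        have zL : z \in L by rewrite inE; apply/forallP => y; apply/eqP.
        by exists tt, (exist _ z zL).
      split.
        move=> [[a b] c] [[a' b'] c'] /= /val_inj ->.
        by rewrite (ord1 b) (ord1 b'); case: a; case: a'.
      split.
        move=> s; split.
          by move=> /hL sL; exists (tt, 1%g, exist _ s sL).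
        by move=> [[[a b] [c cL]] /= <-]; apply/hL.
      move=> [[a b] c] [[a' b'] c'] /=.
      by have := valP c'; rewrite inE => /forallP /(_ (val c)) /eqP ->.
    * move=> G f fM x; have := fM x z; rewrite hz => e.
      have : gmul (f z) (ginv (f z)) = gmul (gmul (f x) (f z)) (ginv (f z)) by rewrite -e.
      by rewrite -gmulA !gmulVr gmul1r => ->.
- case=> [[I [J [H [p [f [KR [cI|cJ]]]]]]] GT].
  + by right; exact: (@back_I S op opA I J H p f KR GT cI).
  + by left; exact: (@back_J S op opA I J H p f KR GT cJ).
Qed.
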